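(* Let $m,n$ be positive integers and $d=2^n$. For a positive integer $k$ let $\ket{b_k}\coloneqq 2^{-k/2}\sum_{i=0}^{2^k-1}\ket{i}\otimes\ket{i}\in\mathbb{C}^{2^k}\otimes\mathbb{C}^{2^k}$, where $\{\ket{i}\}$ is the computational basis. Let $U_p$ be any unitary operator on $\mathbb{C}^{2^m}\otimes\mathbb{C}^{2^n}$, and define the state on $\mathbb{C}^{2^m}\otimes\mathbb{C}^{2^m}\otimes\mathbb{C}^{2^n}\otimes\mathbb{C}^{2^n}$ $$\ket{\varphi}=\left(I_{2^m}\otimes U_p\otimes I_{2^n}\right)\left(\ket{b_m}\otimes\ket{b_n}\right),$$ where $U_p$ acts on the second and third tensor factors. Let $\rho=\operatorname{tr}_{A_2}\left(\ket{\varphi}\bra{\varphi}\right)$ be the density matrix on $\mathbb{C}^{2^n}\otimes\mathbb{C}^{2^n}$ obtained by tracing out the first two tensor factors $A_2=\mathbb{C}^{2^m}\otimes\mathbb{C}^{2^m}$. For $i,j\in\{0,\dots,d-1\}$ let $$p(i,j)\coloneqq 2^n\operatorname{tr}\left(\rho\,\ket{ij}\bra{ij}\right),$$ where $\ket{ij}=\ket{i}\otimes\ket{j}$ with $\ket{i},\ket{j}$ computational basis vectors of $\mathbb{C}^{2^n}$. Let $\{\mathbf{e}_i\}_{i=0}^{d-1}$ be the canonical basis of $\mathbb{R}^{d}$. Then the $d\times d$ matrix $$Q=\sum_{i,j=0}^{d-1}p(i,j)\,\mathbf{e}_i\mathbf{e}_j^\top$$ is doubly stochastic, i.e. $Q$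 has nonnegative real entries, $Q\mathbf{1}_d=\mathbf{1}_d$ and $Q^\top\mathbf{1}_d=\mathbf{1}_d$.
   Context: $\mathbf{1}_d$ denotes the all-ones vector in $\mathbb{R}^d$; $I_k$ the $k\times k$ identity matrix; $\operatorname{tr}_{A_2}$ the partial trace over subsystem $A_2$. *)

(* Defs.v *)
(* Complex scalars: an arbitrary numClosedFieldType C
   (covers the complex numbers). *)
From HB Require Import structures.
From mathcomp Require Import all_boot all_order all_algebra.
From mathcomp Require Import spectral.
From mathcomp.real_closed Require Import mxtens.
Set Implicit Arguments. Unset Strict Implicit. Unset Printing Implicit Defensive.
Import Order.TTheory GRing.Theory Num.Theory.
Local Open Scope ring_scope.
Local Open Scope sesquilinear_scope.

Section Defs.
Variable C : numClosedFieldType.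

Definition ket {k : nat} (i : 'I_k) : 'cV[C]_k := delta_mx i 0.

(* |b_k> = 2^{-k/2} sum_i |i> (x) |i>  ; tensor = Kronecker product tensmx,
   with index convention |i>(x)|j> = |i * dim2 + j>. *)
Definition bell (k : nat) : 'cV[C]_(2 ^ k * 2 ^ k) :=
  (sqrtC (2 ^ k)%:R)^-1 *: \sum_(i < 2 ^ k) tensmx (ket i) (ket i).

Definition dim_assoc4 (a b c d : nat) : ((a * b) * (c * d) = (a * (b * c)) * d)%N.
Proof. by rewrite !mulnA. Defined.

(* |phi> = (I_{2^m} (x) U_p (x) I_{2^n}) (|b_m> (x) |b_n>) on
   C^{2^m} (x) C^{2^m} (x) C^{2^n} (x) C^{2^n}; castmx only re-brackets the
   (associative) tensor product of the four factors. *)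
Definition phi (m n : nat) (Up : 'M[C]_(2 ^ m * 2 ^ n)) :
  'cV[C]_((2 ^ m * 2 ^ m) * (2 ^ n * 2 ^ n)) :=
  castmx (esym (dim_assoc4 (2 ^ m) (2 ^ m) (2 ^ n) (2 ^ n)), erefl)
    (tensmx (tensmx (1%:M : 'M[C]_(2 ^ m)) Up) (1%:M : 'M[C]_(2 ^ n)) *m
     castmx (dim_assoc4 (2 ^ m) (2 ^ m) (2 ^ n) (2 ^ n), erefl)
       (tensmx (bell m) (bell n))).

Definition ptrace1 {p q : nat} (M : 'M[C]_(p * q)) : 'M[C]_q :=
  \matrix_(j, j') \sum_(i < p) M (mxtens_index (i, j)) (mxtens_index (i, j')).

Definition rho (m n : nat) (Up : 'M[C]_(2 ^ m * 2 ^ n)) : 'M[C]_(2 ^ n * 2 ^ n) :=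
  ptrace1 (phi Up *m (phi Up) ^t*).

Definition pij (m n : nat) (Up : 'M[C]_(2 ^ m * 2 ^ n)) (i j : 'I_(2 ^ n)) : C :=
  (2 ^ n)%:R * \tr (rho Up *m (tensmx (ket i) (ket j) *m (tensmx (ket i) (ket j)) ^t*)).

Definition Qmx (m n : nat) (Up : 'M[C]_(2 ^ m * 2 ^ n)) : 'M[C]_(2 ^ n) :=
  \sum_(i < 2 ^ n) \sum_(j < 2 ^ n) pij Up i j *: (ket i *m (ket j)^T).

End Defs.

(* Main.v *)
Set Warnings "-all".
Require Import Defs.
From HB Require Import structures.
From mathcomp Require Import all_boot all_order all_algebra.
From mathcomp Require Import spectral.
From mathcomp.real_closed Require Import mxtens.
From mathcomp Require Import ring.
Set Implicit Arguments. Unset Strict Implicit.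
Import Order.TTheory GRing.Theory Num.Theory.
Local Open Scope ring_scope.
Local Open Scope sesquilinear_scope.

Lemma sum_tens (R : nmodType) p q (F : 'I_(p * q) -> R) :
  \sum_k F k = \sum_(i < p) \sum_(j < q) F (mxtens_index (i, j)).
Proof.
rewrite pair_big /= (reindex (@mxtens_index p q)) /=.
  by apply: eq_bigr => -[i j].
by exists (@mxtens_unindex p q) => x _; [apply: mxtens_indexK | apply: mxtens_unindexK].
Qed.

Lemma sum_only (R : nmodType) p (a : 'I_p) (F : 'I_p -> R) :
  (forall i, i != a -> F i = 0) -> \sum_i F i = F a.
Proof. by move=> H; rewrite (bigD1 a) //= big1 ?addr0. Qed.

Lemma idx00 : (0 : 'I_1) = mxtens_index ((0 : 'I_1), (0 : 'I_1)) :> 'I_(1 * 1).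
Proof. by apply: val_inj. Qed.

Section S.
Variable C : numClosedFieldType.
Variables m n : nat.
Local Notation M := (2 ^ m)%N.
Local Notation D := (2 ^ n)%N.

Lemma bellE k (x y : 'I_(2 ^ k)) :
  @bell C k (mxtens_index (x, y)) 0 = (sqrtC (2 ^ k)%:R)^-1 * (x == y)%:R :> C.
Proof.
rewrite /bell !mxE summxE; congr (_ * _).
rewrite (@sum_only _ _ x).
  by rewrite idx00 tensmxE /ket !mxE !eqxx !andbT mul1r eq_sym.
by move=> i ne; rewrite idx00 tensmxE /ket !mxE eq_sym (negbTE ne) mul0r.
Qed.

Variable Up : 'M[C]_(M * D).

Lemma phiE (a b : 'I_M) (e f : 'I_D) :
  phi Up (mxtens_index (mxtens_index (a, b), mxtens_index (e, f))) 0 =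
  (sqrtC M%:R)^-1 * (sqrtC D%:R)^-1 * Up (mxtens_index (b, e)) (mxtens_index (a, f)).
Proof.
rewrite /phi castmxE mxE.
have -> : cast_ord (esym (esym (dim_assoc4 M M D D), erefl (1*1)%N).1)
   (mxtens_index (mxtens_index (a, b), mxtens_index (e, f))) =
   mxtens_index (mxtens_index (a, mxtens_index (b, e)), f).
  apply: val_inj => /=; ring.
have E : forall a' b' e' f',
  (1%:M *t Up *t 1%:M)
       (mxtens_index (mxtens_index (a, mxtens_index (b, e)), f))
       (mxtens_index (mxtens_index (a', mxtens_index (b', e')), f')) *
     castmx (dim_assoc4 M M D D, erefl) (bell C m *t bell C n)
       (mxtens_index (mxtens_index (a', mxtens_index (b', e')), f'))
       (cast_ord (esym (esym (dim_assoc4 M M D D), erefl (1*1)%N).2) 0) =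
  (a == a')%:R * Up (mxtens_index (b, e)) (mxtens_index (b', e')) * (f == f')%:R *
  ((sqrtC M%:R)^-1 * (a' == b')%:R * ((sqrtC D%:R)^-1 * (e' == f')%:R)).
  move=> a' b' e' f'; rewrite castmxE idx00.
  have -> : cast_ord (esym (dim_assoc4 M M D D, erefl (1*1)%N).1)
     (mxtens_index (mxtens_index (a', mxtens_index (b', e')), f')) =
     mxtens_index (mxtens_index (a', b'), mxtens_index (e', f')).
    by apply: val_inj => /=; ring.
  have -> : cast_ord (esym (dim_assoc4 M M D D, erefl (1*1)%N).2)
     (cast_ord (esym (esym (dim_assoc4 M M D D), erefl (1*1)%N).2) (mxtens_index (0 : 'I_1, 0 : 'I_1)))
      = mxtens_index (0 : 'I_1, 0 : 'I_1) by apply: val_inj.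
  by rewrite tensmxE tensmxE tensmxE !bellE !mxE.
rewrite sum_tens sum_tens; under eq_bigr do rewrite sum_tens.
under eq_bigr do under eq_bigr do under eq_bigr do under eq_bigr do rewrite E.
rewrite (@sum_only _ _ a); last first.
  move=> a' ne; rewrite big1 // => b' _; rewrite big1 // => e' _; rewrite big1 // => f' _.
  by rewrite eq_sym (negbTE ne) !mul0r.
rewrite (@sum_only _ _ a); last first.
  move=> b' ne; rewrite big1 // => e' _; rewrite big1 // => f' _.
  by rewrite [a == b']eq_sym (negbTE ne) mulr0 mul0r mulr0.
rewrite (@sum_only _ _ f); last first.
  move=> e' ne; rewrite big1 // => f' _.
  case: (eqVneq f f') => [<-|ne']; first by rewrite (negbTE ne) !mulr0.
  by rewrite ?mulr0 ?mul0r.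
rewrite (@sum_only _ _ f); last first.
  by move=> f' ne; rewrite eq_sym (negbTE ne) ?mulr0 ?mul0r.
rewrite !eqxx /=; ring.
Qed.

Definition w (b : 'I_M) (e : 'I_D) (a : 'I_M) (f : 'I_D) : C :=
  Up (mxtens_index (b, e)) (mxtens_index (a, f)) * (Up (mxtens_index (b, e)) (mxtens_index (a, f)))^*.

Lemma natM_neq0 : (M%:R : C) != 0.
Proof. by rewrite pnatr_eq0 -lt0n expn_gt0. Qed.
Lemma natD_neq0 : (D%:R : C) != 0.
Proof. by rewrite pnatr_eq0 -lt0n expn_gt0. Qed.

Lemma rhoE (e f : 'I_D) :
  rho Up (mxtens_index (e, f)) (mxtens_index (e, f)) =
  (M%:R)^-1 * (D%:R)^-1 * \sum_(a < M) \sum_(b < M) w b e a f.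
Proof.
rewrite /rho /ptrace1 mxE sum_tens mulr_sumr; apply: eq_bigr => a _.
rewrite mulr_sumr; apply: eq_bigr => b _.
rewrite mxE big_ord1 !mxE phiE /w rmorphM rmorphM.
have c1 : ((sqrtC M%:R)^-1)^* = (sqrtC M%:R)^-1 :> C.
  by apply: geC0_conj; rewrite invr_ge0 sqrtC_ge0 ler0n.
have c2 : ((sqrtC D%:R)^-1)^* = (sqrtC D%:R)^-1 :> C.
  by apply: geC0_conj; rewrite invr_ge0 sqrtC_ge0 ler0n.
rewrite /= c1 c2.
have s1 : (sqrtC M%:R)^-1 * (sqrtC M%:R)^-1 = (M%:R)^-1 :> C.
  by rewrite -invfM -expr2 sqrtCK.
have s2 : (sqrtC D%:R)^-1 * (sqrtC D%:R)^-1 = (D%:R)^-1 :> C.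
  by rewrite -invfM -expr2 sqrtCK.
rewrite -s1 -s2; ring.
Qed.

Lemma ket_tens p q (i : 'I_p) (j : 'I_q) :
  (ket C i *t ket C j) = delta_mx (mxtens_index (i, j)) (0 : 'I_(1 * 1)).
Proof.
apply/matrixP => k l; rewrite -[k]mxtens_unindexK -[l]mxtens_unindexK.
case: (mxtens_unindex k) => x y; case: (mxtens_unindex l) => u v.
rewrite tensmxE !mxE !ord1 /= (inj_eq (can_inj (@mxtens_indexK p q))) xpair_eqE !eqxx !andbT.
by case: (x == i); case: (y == j); rewrite ?mulr1 ?mulr0 ?mul0r.
Qed.

Lemma pijE (e f : 'I_D) :
  pij Up e f = (M%:R)^-1 * \sum_(a < M) \sum_(b < M) w b e a f.
Proof.
rewrite /pij ket_tens.
have -> : (delta_mx (mxtens_index (e, f)) (0 : 'I_(1*1)))^t* =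
     delta_mx (0 : 'I_(1*1)) (mxtens_index (e, f)) :> 'M[C]_(1 * 1, D * D).
  by apply/matrixP => k l; rewrite !mxE conjC_nat andbC.
rewrite mul_delta_mx_cond eqxx mulr1n.
have -> : \tr (rho Up *m delta_mx (mxtens_index (e, f)) (mxtens_index (e, f))) =
   rho Up (mxtens_index (e, f)) (mxtens_index (e, f)).
  rewrite /mxtrace (@sum_only _ _ (mxtens_index (e, f))).
    rewrite mxE (@sum_only _ _ (mxtens_index (e, f))) ?mxE ?eqxx ?mulr1 //.
    by move=> l ne; rewrite !mxE (negbTE ne) mulr0.
  move=> k ne; rewrite mxE big1 // => l _; rewrite !mxE.
  by rewrite (negbTE ne) andbF mulr0.
rewrite rhoE; field; by rewrite natM_neq0 natD_neq0.
Qed.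

Lemma QmxE (i j : 'I_D) : Qmx Up i j = pij Up i j.
Proof.
rewrite summxE (@sum_only _ _ i).
  rewrite summxE (@sum_only _ _ j).
    by rewrite !mxE big_ord1 !mxE !eqxx /= mulr1 mulr1.
  move=> j' ne; rewrite !mxE big_ord1 !mxE.
  by rewrite [j == j']eq_sym (negbTE ne) /= ?mulr0 ?mul0r.
move=> i' ne; rewrite summxE big1 // => j' _; rewrite !mxE big_ord1 !mxE.
by rewrite [i == i']eq_sym (negbTE ne) /= mul0r mulr0.
Qed.

Lemma rowU (hU : Up \is unitarymx) r :
  \sum_k Up r k * (Up r k)^* = 1.
Proof.
have /matrixP/(_ r r) := unitarymxP hU; rewrite !mxE eqxx mulr1n => <-.
by apply: eq_bigr => k _; rewrite !mxE.
Qed.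

Lemma colU (hU : Up \is unitarymx) c :
  \sum_k Up k c * (Up k c)^* = 1.
Proof.
have hT : Up^T \is unitarymx by rewrite trmx_unitary.
have /matrixP/(_ c c) := unitarymxP hT; rewrite !mxE eqxx mulr1n => <-.
by apply: eq_bigr => k _; rewrite !mxE.
Qed.

Lemma rowsum (hU : Up \is unitarymx) e : \sum_f pij Up e f = 1.
Proof.
under eq_bigr do rewrite pijE.
rewrite -mulr_sumr exchange_big /=.
under eq_bigr do rewrite exchange_big /=.
rewrite exchange_big /=.
under eq_bigr => b _ do rewrite -(sum_tens (fun k => Up (mxtens_index (b, e)) k * (Up (mxtens_index (b, e)) k)^*)) rowU //.
by rewrite sumr_const card_ord mulVf ?natM_neq0.
Qed.

Lemma colsum (hU : Up \is unitarymx) f : \sum_e pij Up e f = 1.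
Proof.
under eq_bigr do rewrite pijE.
rewrite -mulr_sumr exchange_big /=.
under eq_bigr do rewrite exchange_big /=.
under eq_bigr => a _ do rewrite -(sum_tens (fun k => Up k (mxtens_index (a, f)) * (Up k (mxtens_index (a, f)))^*)) colU //.
by rewrite sumr_const card_ord mulVf ?natM_neq0.
Qed.

Lemma pij_ge0 e f : 0 <= pij Up e f.
Proof.
rewrite pijE mulr_ge0 ?invr_ge0 ?ler0n //.
by apply: sumr_ge0 => a _; apply: sumr_ge0 => b _; apply: mul_conjC_ge0.
Qed.

End S.

Theorem lemma2 (C : numClosedFieldType) (m n : nat) (hm : (0 < m)%N) (hn : (0 < n)%N)
  (Up : 'M[C]_(2 ^ m * 2 ^ n)) (hU : Up \is unitarymx) :
  (forall i j : 'I_(2 ^ n), 0 <= Qmx Up i j) /\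
  Qmx Up *m (const_mx 1 : 'cV[C]_(2 ^ n)) = const_mx 1 /\
  (Qmx Up)^T *m (const_mx 1 : 'cV[C]_(2 ^ n)) = const_mx 1.
Proof.
split; first by move=> i j; rewrite QmxE pij_ge0.
split; apply/matrixP => i k; rewrite !mxE.
  rewrite -[RHS](rowsum hU i); apply: eq_bigr => j _; by rewrite !mxE QmxE mulr1.
rewrite -[RHS](colsum hU i); apply: eq_bigr => j _; by rewrite !mxE QmxE mulr1.
Qed.
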